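(* Let $\mathbb G$ be a finite (possibly non-abelian) group with operation $+$ and $n\ge1$. Consider the function group-add: Alice has $X\in\mathbb G^n$, Bob has $Y\in\mathbb G^n$, Charlie outputs $Z=X+Y$ (component-wise). For every $p_{XY}$ with full support on $\mathbb G^n\times\mathbb G^n$, any secure protocol satisfies \[H(M_{12}),\ H(M_{23}),\ H(M_{31})\ge n\log|\mathbb G|,\] and $\rho(p_{XY},\text{group-add})\ge n\log|\mathbb G|$.
   Context: Setting: Alice (party 1) holds $X$, Bob (party 2) holds $Y$, $(X,Y)\sim p_{XY}$ on finite sets; Charlie (party 3) has no input and outputs $Z$, which should equal $f(X,Y)$ for the deterministic function $f$. In a protocol the parties, each with private randomness, exchange messages over multiple rounds on three pairwise private links, each message a codeword of a prefix-free code determined by previous messages on that link; the protocol terminates with probability 1 and may depend on $p_{XY}$. $M_{12},M_{23},M_{31}$ are the final transcripts on the Alice–Bob, Bob–Charlie, Charlie–Alice links; the view $V_i$ of party $i$ consists of the transcripts on its two links plus its input (Alice, Bob) or output (Charlie). A secure protocol satisfies correctness (Charlie outputs $f(x,y)$ on inputs $x,y$) and privacy (Markov chains $(M_{12},M_{31})-X-(Y,Z)$, $(M_{12},M_{23})-Y-(X,Z)$, $(M_{23},M_{31})-Z-(X,Y)$). $\rho(p_{XY},f)=\inf H(V_1,V_2,V_3|X,Y)$ over all secure protocols for $f$ with input distribution $p_{XY}$. Logs base 2. *)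

(* Defs.v *)
From HB Require Import structures.
From mathcomp Require Import all_boot all_order all_algebra all_fingroup.
From mathcomp Require Import all_classical all_reals all_analysis.

Set Implicit Arguments.
Unset Strict Implicit.
Unset Printing Implicit Defensive.

Import Order.TTheory GRing.Theory Num.Theory.
Local Open Scope classical_set_scope.
Local Open Scope ring_scope.

Definition word := seq bool.

Definition prefix_free (C : set word) : Prop :=
  forall u v, C u -> C v -> seq.prefix u v -> u = v.

(* The history of one link: the list, round by round, of the pair of
   messages sent on it in the two directions. *)
Definition lhist := seq (word * word).

(* One (synchronous) round: on each of the three links, one message in each
   direction (possibly the empty word).
     link 12 : (Alice -> Bob,     Bob -> Alice)
     link 23 : (Bob -> Charlie,   Charlie -> Bob)
     link 31 : (Charlie -> Alice, Alice -> Charlie) *)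
Definition round := ((word * word) * (word * word) * (word * word))%type.

Definition l12 (r : round) : word * word := r.1.1.
Definition l23 (r : round) : word * word := r.1.2.
Definition l31 (r : round) : word * word := r.2.

Definition eps_round : round := (([::], [::]), ([::], [::]), ([::], [::])).

Definition tr_of (l : round -> word * word) (h : seq round) : word :=
  flatten [seq (l r).1 ++ (l r).2 | r <- h].

(* In each round every party, using its
   private randomness, sends one message to each of the two other parties;
   its (joint) choice of the two messages is given by a probability kernel
   conditioned on everything it has seen so far (its input / nothing, and
   the histories of its two links) -- this is exactly the behaviour of a
   party with persistent private randomness. Each message on a directed link
   is a codeword of a prefix-free code determined by the previous messages
   on that link. *)
Record protocol (X Y Z : finType) (R : realType) := Protocol {
  codeAB : lhist -> set word;
  codeBA : lhist -> set word;
  codeBC : lhist -> set word;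
  codeCB : lhist -> set word;
  codeCA : lhist -> set word;
  codeAC : lhist -> set word;
  (* alice x h12 h31 (to Bob, to Charlie) *)
  alice : X -> lhist -> lhist -> word * word -> R;
  (* bob y h12 h23 (to Charlie, to Alice) *)
  bob : Y -> lhist -> lhist -> word * word -> R;
  (* charlie h23 h31 (to Alice, to Bob) *)
  charlie : lhist -> lhist -> word * word -> R;
  (* out m23 m31 z : Charlie's output distribution given his final transcripts *)
  out : word -> word -> Z -> R
}.

Section ProtocolSemantics.
Variables (X Y Z : finType) (R : realType).
Implicit Type P : protocol X Y Z R.

Definition valid_protocol P : Prop :=
  (forall h, prefix_free (codeAB P h)) /\ (forall h, prefix_free (codeBA P h)) /\
  (forall h, prefix_free (codeBC P h)) /\ (forall h, prefix_free (codeCB P h)) /\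
  (forall h, prefix_free (codeCA P h)) /\ (forall h, prefix_free (codeAC P h)) /\
  (forall x h12 h31,
     (forall m, 0 <= alice P x h12 h31 m) /\
     (\esum_(m in setT) (alice P x h12 h31 m)%:E = 1)%E /\
     (forall u v, 0 < alice P x h12 h31 (u, v) ->
        codeAB P h12 u /\ codeAC P h31 v)) /\
  (forall y h12 h23,
     (forall m, 0 <= bob P y h12 h23 m) /\
     (\esum_(m in setT) (bob P y h12 h23 m)%:E = 1)%E /\
     (forall u v, 0 < bob P y h12 h23 (u, v) ->
        codeBC P h23 u /\ codeBA P h12 v)) /\
  (forall h23 h31,
     (forall m, 0 <= charlie P h23 h31 m) /\
     (\esum_(m in setT) (charlie P h23 h31 m)%:E = 1)%E /\
     (forall u v, 0 < charlie P h23 h31 (u, v) ->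
        codeCA P h31 u /\ codeCB P h23 v)) /\
  (forall m23 m31, (forall z, 0 <= out P m23 m31 z) /\
     \sum_(z : Z) out P m23 m31 z = 1).

Definition step P (x : X) (y : Y) (h : seq round) (rd : round) : R :=
  alice P x (map l12 h) (map l31 h) ((l12 rd).1, (l31 rd).2) *
  bob P y (map l12 h) (map l23 h) ((l23 rd).1, (l12 rd).2) *
  charlie P (map l23 h) (map l31 h) ((l31 rd).1, (l23 rd).2).

Definition hprob P (x : X) (y : Y) (h : seq round) : R :=
  \prod_(k < size h) step P x y (take k h) (nth eps_round h k).

(* after history [h] the protocol has terminated: from now on every code
   on every link is {empty word}, so nothing more can ever be sent *)
Definition quiescent P (h : seq round) : Prop :=
  forall k, let h' := h ++ nseq k eps_round in
    codeAB P (map l12 h') = [set [::]] /\ codeBA P (map l12 h') = [set [::]] /\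
    codeBC P (map l23 h') = [set [::]] /\ codeCB P (map l23 h') = [set [::]] /\
    codeCA P (map l31 h') = [set [::]] /\ codeAC P (map l31 h') = [set [::]].

Definition complete_run P (h : seq round) : Prop :=
  quiescent P h /\ forall k, (k < size h)%N -> ~ quiescent P (take k h).

Definition terminates P : Prop :=
  forall x y, (\esum_(h in complete_run P) (hprob P x y h)%:E = 1)%E.

Definition cond_law P (x : X) (y : Y) (m12 m23 m31 : word) (z : Z) : \bar R :=
  \esum_(h in [set h | complete_run P h /\ tr_of l12 h = m12 /\
                       tr_of l23 h = m23 /\ tr_of l31 h = m31])
     (hprob P x y h * out P m23 m31 z)%:E.

Definition outcome := (X * Y * word * word * word * Z)%type.
Definition oX (o : outcome) : X := o.1.1.1.1.1.
Definition oY (o : outcome) : Y := o.1.1.1.1.2.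
Definition oM12 (o : outcome) : word := o.1.1.1.2.
Definition oM23 (o : outcome) : word := o.1.1.2.
Definition oM31 (o : outcome) : word := o.1.2.
Definition oZ (o : outcome) : Z := o.2.

Definition joint (p : X -> Y -> R) P (o : outcome) : \bar R :=
  ((p (oX o) (oY o))%:E * cond_law P (oX o) (oY o) (oM12 o) (oM23 o) (oM31 o) (oZ o))%E.

Definition V1 (o : outcome) := (oX o, oM12 o, oM31 o).
Definition V2 (o : outcome) := (oY o, oM12 o, oM23 o).
Definition V3 (o : outcome) := (oZ o, oM23 o, oM31 o).

End ProtocolSemantics.

Section Info.
Variables (R : realType) (T : choiceType).

Definition Pr (mu : T -> \bar R) (E : set T) : \bar R := \esum_(t in E) mu t.

Definition log2 (a : R) : R := ln a / ln 2.

Definition markov (mu : T -> \bar R) (TA TB TC : Type)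
    (A : T -> TA) (B : T -> TB) (C : T -> TC) : Prop :=
  forall a b c,
    (Pr mu [set t | A t = a /\ B t = b /\ C t = c] * Pr mu [set t | B t = b] =
     Pr mu [set t | A t = a /\ B t = b] * Pr mu [set t | B t = b /\ C t = c])%E.

Definition entropy (mu : T -> \bar R) (TA : choiceType) (A : T -> TA) : \bar R :=
  \esum_(a in [set: TA])
    (let q := fine (Pr mu [set t | A t = a]) in
     if q == 0 then 0 else - q * log2 q)%:E.

Definition cond_entropy (mu : T -> \bar R) (TA TB : choiceType)
    (A : T -> TA) (B : T -> TB) : \bar R :=
  \esum_(ab in [set: TA * TB])
    (let qab := fine (Pr mu [set t | A t = ab.1 /\ B t = ab.2]) in
     let qb := fine (Pr mu [set t | B t = ab.2]) in
     if qab == 0 then 0 else - qab * log2 (qab / qb))%:E.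

End Info.

Section Security.
Variables (X Y Z : finType) (R : realType).

Definition correct (f : X -> Y -> Z) (P : protocol X Y Z R) : Prop :=
  forall x y m12 m23 m31 z, (0 < cond_law P x y m12 m23 m31 z)%E -> z = f x y.

Definition private (p : X -> Y -> R) (P : protocol X Y Z R) : Prop :=
  let mu := joint p P in
  markov mu (fun o => (oM12 o, oM31 o)) (@oX X Y Z) (fun o => (oY o, oZ o)) /\
  markov mu (fun o => (oM12 o, oM23 o)) (@oY X Y Z) (fun o => (oX o, oZ o)) /\
  markov mu (fun o => (oM23 o, oM31 o)) (@oZ X Y Z) (fun o => (oX o, oY o)).

Definition secure (p : X -> Y -> R) (f : X -> Y -> Z) (P : protocol X Y Z R) : Prop :=
  valid_protocol P /\ terminates P /\ correct f P /\ private p P.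

Definition views_entropy (p : X -> Y -> R) (P : protocol X Y Z R) : \bar R :=
  cond_entropy (joint p P)
    (fun o => (@V1 X Y Z o, @V2 X Y Z o, @V3 X Y Z o))
    (fun o => (@oX X Y Z o, @oY X Y Z o)).

Definition rho (p : X -> Y -> R) (f : X -> Y -> Z) : \bar R :=
  ereal_inf [set views_entropy p P | P in [set P | secure p f P]].

Definition is_pmf (p : X -> Y -> R) : Prop :=
  (forall x y, 0 <= p x y) /\ \sum_(x : X) \sum_(y : Y) p x y = 1.

End Security.

(* component-wise group addition on G^n (G possibly non-abelian, written
   multiplicatively in MathComp) *)
Definition group_add (gT : finGroupType) (n : nat)
    (x y : {ffun 'I_n -> gT}) : {ffun 'I_n -> gT} :=
  [ffun i => (x i * y i)%g].

(* Main.v *)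
Require Import Defs.
From HB Require Import structures.
From mathcomp Require Import all_boot all_order all_algebra all_fingroup.
From mathcomp Require Import all_classical all_reals all_analysis.
Import Order.TTheory GRing.Theory Num.Theory.
Local Open Scope ring_scope.

Set Implicit Arguments.
Unset Strict Implicit.
Unset Printing Implicit Defensive.
Local Open Scope classical_set_scope.
Local Open Scope ereal_scope.

Lemma esum_finT (R : realType) (T : finType) (a : T -> \bar R) :
  (forall i, 0 <= a i) -> \esum_(i in [set: T]) a i = \sum_(i : T) a i.
Proof.
move=> a0; rewrite esum_fset; [| exact: finite_finset | by move=> i _; exact: a0].
rewrite fsbig_finite; last exact: finite_finset.
apply: perm_big.
apply: uniq_perm; [exact: finmap.fset_uniq | exact: index_enum_uniq |].
move=> i; rewrite in_fset_set ?mem_index_enum ?in_setT //; exact: finite_finset.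
Qed.

Lemma esumZl (R : realType) (T : choiceType) (S : set T) (a : T -> \bar R) (r : R) :
  (0 <= r)%R -> (forall i, 0 <= a i) ->
  \esum_(i in S) (r%:E * a i) = r%:E * \esum_(i in S) a i.
Proof.
move=> r0 a0; rewrite /esum -ereal_supZl //; last first.
  by apply/set0P; exists 0; exists set0; [exact: fsets_set0 | rewrite fsbig_set0].
congr ereal_sup; apply/seteqP; split => x /=.
- move=> [A [finA AS] <-]; exists (\sum_(i \in A) a i); first by exists A.
  rewrite !fsbig_finite // ge0_sume_distrr //.
- move=> [y [A [finA AS] <-] <-]; exists A => //.
  rewrite !fsbig_finite // ge0_sume_distrr //.
Qed.

Section PrLemmas.
Variables (R : realType) (T : choiceType) (mu : T -> \bar R).
Hypothesis mu0 : forall t, 0 <= mu t.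

Lemma Pr_ge0 E : 0 <= Pr mu E.
Proof. by apply: esum_ge0 => t _; exact: mu0. Qed.

Lemma Pr_le (E F : set T) : E `<=` F -> Pr mu E <= Pr mu F.
Proof.
move=> EF; rewrite /Pr [X in X <= _]esum_mkcond [X in _ <= X]esum_mkcond.
apply: le_esum => t _; case: (boolP (t \in E)) => tE; case: (boolP (t \in F)) => tF //.
  by exfalso; move/negP: tF; apply; rewrite inE; apply: EF; rewrite -inE.
Qed.

Lemma Pr_eqnull (E F : set T) :
  (forall t, 0 < mu t -> (E t <-> F t)) -> Pr mu E = Pr mu F.
Proof.
move=> EF; rewrite /Pr esum_mkcond [RHS]esum_mkcond; apply: eq_esum => t _.
have [mupos|] := ltP 0 (mu t).
  have := EF t mupos => -[h1 h2].
  case: (boolP (t \in E)) => tE; case: (boolP (t \in F)) => tF //.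
    by exfalso; move/negP: tF; apply; rewrite inE; apply: h1; rewrite -inE.
  by exfalso; move/negP: tE; apply; rewrite inE; apply: h2; rewrite -inE.
move=> mule0; have mut0 : mu t = 0 by apply/le_anti; rewrite mule0 mu0.
by rewrite mut0; case: ifPn; case: ifPn.
Qed.

Lemma Pr_ext (E F : set T) : (forall t, E t <-> F t) -> Pr mu E = Pr mu F.
Proof. by move=> EF; apply: Pr_eqnull => t _; exact: EF. Qed.

Lemma Pr_pos (E : set T) : 0 < Pr mu E -> exists t, E t /\ 0 < mu t.
Proof.
move=> H; apply: contrapT => nex; move: H; rewrite /Pr esum1 ?ltxx // => t Et.
apply/le_anti; rewrite mu0 andbT; rewrite leNgt; apply/negP => mpos.
by apply: nex; exists t.
Qed.

Lemma Pr_partS (U : choiceType) (f : T -> U) (S : set U) (E : set T) :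
  Pr mu (E `&` (f @^-1` S)) = \esum_(u in S) Pr mu (E `&` [set t | f t = u]).
Proof.
rewrite /Pr esum_esum; last by move=> *; exact: mu0.
rewrite (reindex_esum (E `&` (f @^-1` S)) _ (fun t => (f t, t))) //.
split.
- by move=> t /= [Et St]; split => //.
- by move=> t1 t2 _ _ [].
- by move=> [u t] /= [Su [Et ftu]]; exists t => //; rewrite ftu.
Qed.

Lemma Pr_part (U : choiceType) (f : T -> U) (E : set T) :
  Pr mu E = \esum_(u in [set: U]) Pr mu (E `&` [set t | f t = u]).
Proof.
rewrite -Pr_partS; apply: Pr_ext => t; split; first by move=> Et; split.
by case.
Qed.

Lemma Pr_fpart (U : finType) (f : T -> U) (E : set T) :
  Pr mu E = \sum_(u : U) Pr mu (E `&` [set t | f t = u]).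
Proof. by rewrite (Pr_part f) esum_finT // => u; exact: Pr_ge0. Qed.

End PrLemmas.

Section Markov.
Variables (R : realType) (T : choiceType) (mu : T -> \bar R).
Hypothesis mu0 : forall t, 0 <= mu t.
Hypothesis mu1 : Pr mu setT = 1.

Lemma Pr_le1 E : Pr mu E <= 1.
Proof. by rewrite -mu1; apply: Pr_le. Qed.

Lemma Pr_fin E : Pr mu E \is a fin_num.
Proof.
rewrite ge0_fin_numE; last exact: Pr_ge0.
by apply: (le_lt_trans (Pr_le1 E)); rewrite ltry.
Qed.

Lemma PrE E : Pr mu E = (fine (Pr mu E))%:E.
Proof. by rewrite fineK //; exact: Pr_fin. Qed.

Lemma fine_Pr_ge0 E : (0 <= fine (Pr mu E))%R.
Proof. by rewrite -lee_fin -PrE; exact: Pr_ge0. Qed.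

Lemma markov_sym (TA TB TC : Type) (A : T -> TA) (B : T -> TB) (C : T -> TC) :
  Defs.markov mu A B C -> Defs.markov mu C B A.
Proof.
move=> H c b a; have := H a b c.
rewrite (@Pr_ext _ _ mu mu0 [set t | A t = a /\ B t = b /\ C t = c]
   [set t | C t = c /\ B t = b /\ A t = a]); last by move=> t /=; tauto.
rewrite (@Pr_ext _ _ mu mu0 [set t | A t = a /\ B t = b] [set t | B t = b /\ A t = a]);
  last by move=> t /=; tauto.
rewrite (@Pr_ext _ _ mu mu0 [set t | B t = b /\ C t = c] [set t | C t = c /\ B t = b]);
  last by move=> t /=; tauto.
by move=> ->; rewrite muleC.
Qed.

Lemma markov_coarsenC (TA TB : Type) (TC : choiceType) (TC' : Type)
  (A : T -> TA) (B : T -> TB) (C : T -> TC) (h : TC -> TC') :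
  Defs.markov mu A B C -> Defs.markov mu A B (fun t => h (C t)).
Proof.
move=> H a b c'.
have e1 : Pr mu [set t | A t = a /\ B t = b /\ h (C t) = c'] =
   \esum_(c in [set c | h c = c']) Pr mu [set t | A t = a /\ B t = b /\ C t = c].
  transitivity (\esum_(c in [set c | h c = c']) Pr mu ([set t | A t = a /\ B t = b] `&` [set t | C t = c])).
    rewrite -(@Pr_partS _ _ mu mu0 _ C [set c | h c = c'] [set t | A t = a /\ B t = b]).
    by apply: Pr_ext => // t /=; tauto.
  by apply: eq_esum => c _; apply: Pr_ext => // t /=; tauto.
have e2 : Pr mu [set t | B t = b /\ h (C t) = c'] =
   \esum_(c in [set c | h c = c']) Pr mu [set t | B t = b /\ C t = c].
  transitivity (\esum_(c in [set c | h c = c']) Pr mu ([set t | B t = b] `&` [set t | C t = c])).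
    rewrite -(@Pr_partS _ _ mu mu0 _ C [set c | h c = c'] [set t | B t = b]).
    by apply: Pr_ext => // t /=; tauto.
  by apply: eq_esum => c _; apply: Pr_ext => // t /=; tauto.
rewrite e1 e2 muleC (PrE [set t | B t = b]) (PrE [set t | A t = a /\ B t = b]).
rewrite -esumZl; [| exact: fine_Pr_ge0 | by move=> ?; exact: Pr_ge0].
rewrite -esumZl; [| exact: fine_Pr_ge0 | by move=> ?; exact: Pr_ge0].
apply: eq_esum => c _; rewrite -!PrE muleC; exact: H.
Qed.

Lemma markov_coarsenA (TA : choiceType) (TB TC : Type) (TA' : Type)
  (A : T -> TA) (B : T -> TB) (C : T -> TC) (g : TA -> TA') :
  Defs.markov mu A B C -> Defs.markov mu (fun t => g (A t)) B C.
Proof.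
move=> H; apply: markov_sym; apply: markov_coarsenC; exact: markov_sym.
Qed.

End Markov.

Lemma sum_esum_le (R : realType) (I : finType) (W : choiceType)
  (u : I -> W -> \bar R) (v : W -> \bar R) :
  (forall i w, 0 <= u i w) -> (forall i w, u i w <= v w) -> (forall w, 0 <= v w) ->
  (forall i j w, 0 < u i w -> 0 < u j w -> i = j) ->
  \sum_(i : I) \esum_(w in [set: W]) u i w <= \esum_(w in [set: W]) v w.
Proof.
move=> u0 uv v0 uniq.
rewrite -esum_sum; last by move=> *; exact: u0.
apply: le_esum => w _.
have [[i ipos]|none] := pselect (exists i, 0 < u i w).
  rewrite (bigD1 i) //= big1 ?adde0 //.
  move=> j ji; apply/le_anti; rewrite u0 andbT leNgt; apply/negP => jpos.
  by move/eqP: ji; apply; exact: uniq _ _ _ jpos ipos.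
rewrite big1 //.
move=> i _; apply/le_anti; rewrite u0 andbT leNgt; apply/negP => ipos.
by apply: none; exists i.
Qed.

Lemma bound_gen (R : realType) (I : finType) (W : choiceType)
  (u : I -> W -> \bar R) (v : W -> \bar R) (c : R) :
  (forall i, \esum_(w in [set: W]) u i w = c%:E) ->
  (forall i w, 0 <= u i w) -> (forall i w, u i w <= v w) -> (forall w, 0 <= v w) ->
  (forall i j w, 0 < u i w -> 0 < u j w -> i = j) ->
  \esum_(w in [set: W]) v w = 1 ->
  (#|I|%:R * c <= 1)%R.
Proof.
move=> uc u0 uv v0 uniq v1.
have := sum_esum_le u0 uv v0 uniq.
rewrite v1 (eq_bigr (fun=> c%:E)); last by move=> i _; exact: uc.
by rewrite sumEFin sumr_const mulr_natl lee_fin.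
Qed.

Section Grp.
Variables (gT : finGroupType) (n : nat).
Local Notation V := {ffun 'I_n -> gT}.
Definition one_f : V := [ffun => 1%g].
Definition inv_f (x : V) : V := [ffun i => ((x i)^-1)%g].
Lemma ga_inv (x : V) : group_add x (inv_f x) = group_add (one_f : V) (one_f : V).
Proof. by apply/ffunP => i; rewrite !ffunE mulgV mulg1. Qed.
Lemma ga_invl (y : V) : group_add (inv_f y) y = group_add (one_f : V) (one_f : V).
Proof. by apply/ffunP => i; rewrite !ffunE mulVg mulg1. Qed.
Lemma ga_cancl (x y yp : V) : group_add x y = group_add x yp -> y = yp.
Proof. by move=> /ffunP e; apply/ffunP => i; have := e i; rewrite !ffunE => /mulgI. Qed.
Lemma ga_cancr (x xp y : V) : group_add x y = group_add xp y -> x = xp.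
Proof. by move=> /ffunP e; apply/ffunP => i; have := e i; rewrite !ffunE => /mulIg. Qed.
End Grp.

Lemma ratio_eq (R : realFieldType) (a b c d : R) :
  (a * b = c * d)%R -> (0 < b)%R -> (0 < d)%R -> (a / d = c / b)%R.
Proof.
move=> H b0 d0; have hb : b != 0%R by rewrite gt_eqF.
have hd : d != 0%R by rewrite gt_eqF.
by rewrite -[a](mulfK hb) H mulrAC mulfK.
Qed.

Section Core.
Variables (R : realType) (gT : finGroupType) (n : nat).
Local Notation V := {ffun 'I_n -> gT}.
Variables (T : choiceType) (mu : T -> \bar R) (X Y Z : T -> V)
  (M1 M2 M3 : T -> word) (p : V -> V -> R).
Hypothesis mu0 : forall t, 0 <= mu t.
Hypothesis hXY : forall x y, Pr mu [set t | X t = x /\ Y t = y] = (p x y)%:E.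
Hypothesis ppos : forall x y, (0 < p x y)%R.
Hypothesis psum : (\sum_x \sum_y p x y = 1)%R.
Hypothesis hcorr : forall t, 0 < mu t -> Z t = group_add (X t) (Y t).

Lemma mu1 : Pr mu setT = 1.
Proof.
rewrite (Pr_fpart mu0 (fun t => (X t, Y t))).
transitivity (\sum_(u : V * V) (p u.1 u.2)%:E).
  apply: eq_bigr => -[x y] _; rewrite -hXY; apply: Pr_ext => // t /=.
  by split; [case=> _ [-> ->] | case=> -> ->].
by rewrite sumEFin -pair_bigA /= psum.
Qed.

Let PrE' := PrE mu0 mu1.

Definition phi (W : Type) (A : T -> W) w x y :=
  (fine (Pr mu [set t | A t = w /\ X t = x /\ Y t = y]) / p x y)%R.

Lemma Pr_phi (W : Type) (A : T -> W) w x y :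
  Pr mu [set t | A t = w /\ X t = x /\ Y t = y] = (phi A w x y * p x y)%:E.
Proof. by rewrite /phi divfK ?gt_eqF // -PrE'. Qed.

Lemma phi_x (W : Type) (A : T -> W) w x y y' :
  Defs.markov mu A X Y -> phi A w x y = phi A w x y'.
Proof.
move=> H.
have Px : (0 < fine (Pr mu [set t | X t = x]))%R.
  rewrite -lte_fin -PrE'; apply: (@lt_le_trans _ _ (p x y)%:E).
    by rewrite lte_fin.
  by rewrite -hXY; apply: Pr_le => // t [].
have E y0 : phi A w x y0 = (fine (Pr mu [set t | A t = w /\ X t = x]) /
                            fine (Pr mu [set t | X t = x]))%R.
  apply: ratio_eq => //; apply/EFin_inj; rewrite !EFinM -!PrE' -hXY; exact: H.
by rewrite !E.
Qed.

Lemma phi_y (W : Type) (A : T -> W) w x x' y :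
  Defs.markov mu A Y X -> phi A w x y = phi A w x' y.
Proof.
move=> H.
have Py : (0 < fine (Pr mu [set t | Y t = y]))%R.
  rewrite -lte_fin -PrE'; apply: (@lt_le_trans _ _ (p x y)%:E).
    by rewrite lte_fin.
  by rewrite -hXY; apply: Pr_le => // t [].
have E x0 : phi A w x0 y = (fine (Pr mu [set t | A t = w /\ Y t = y]) /
                            fine (Pr mu [set t | Y t = y]))%R.
  apply: ratio_eq => //; apply/EFin_inj; rewrite !EFinM -!PrE' -hXY.
  have := H w y x0.
  rewrite (@Pr_ext _ _ mu mu0 [set t | A t = w /\ Y t = y /\ X t = x0]
     [set t | A t = w /\ X t = x0 /\ Y t = y]); last by move=> t /=; tauto.
  rewrite (@Pr_ext _ _ mu mu0 [set t | Y t = y /\ X t = x0]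
     [set t | X t = x0 /\ Y t = y]); last by move=> t /=; tauto.
  done.
by rewrite !E.
Qed.

Lemma phi_z (W : Type) (A : T -> W) w x y x' y' :
  Defs.markov mu A Z (fun t => (X t, Y t)) ->
  group_add x y = group_add x' y' -> phi A w x y = phi A w x' y'.
Proof.
move=> H exy.
have E x0 y0 : group_add x0 y0 = group_add x y ->
   phi A w x0 y0 = (fine (Pr mu [set t | A t = w /\ Z t = group_add x y]) /
                    fine (Pr mu [set t | Z t = group_add x y]))%R.
  move=> e0.
  have e1 : Pr mu [set t | Z t = group_add x y /\ (X t, Y t) = (x0, y0)] = (p x0 y0)%:E.
    rewrite -hXY; apply: Pr_eqnull => // t /= /hcorr ->.
    by split; [case=> _ [-> ->] | case=> -> ->; split].
  apply: ratio_eq => //.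
  - apply/EFin_inj; rewrite !EFinM -!PrE' -e1.
    have := H w (group_add x y) (x0, y0).
    rewrite (@Pr_eqnull _ _ mu mu0 [set t | A t = w /\ Z t = group_add x y /\ (X t, Y t) = (x0, y0)]
       [set t | A t = w /\ X t = x0 /\ Y t = y0]) //.
    move=> t /= /hcorr ->; rewrite -e0.
    by split; [case=> -> [_ [-> ->]] | case=> -> [-> ->]].
  - rewrite -lte_fin -PrE'; apply: (@lt_le_trans _ _ (p x0 y0)%:E).
      by rewrite lte_fin.
    by rewrite -e1; apply: Pr_le => // t [].
by rewrite !E // exy.
Qed.


Lemma phi_ge0 (W : Type) (A : T -> W) w x y : (0 <= phi A w x y)%R.
Proof. by rewrite /phi divr_ge0 ?(fine_Pr_ge0 mu0 mu1) //; apply: ltW. Qed.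

Lemma phiE (W : Type) (A : T -> W) w x y :
  (phi A w x y)%:E = ((p x y)^-1)%:E * Pr mu [set t | A t = w /\ X t = x /\ Y t = y].
Proof. by rewrite PrE' -EFinM mulrC. Qed.

Lemma esum_phi (W : choiceType) (A : T -> W) x y :
  \esum_(w in [set: W]) (phi A w x y)%:E = 1.
Proof.
under eq_esum do rewrite phiE.
rewrite esumZl; [| by rewrite invr_ge0; apply: ltW | by move=> ?; exact: Pr_ge0].
rewrite (eq_esum (b := fun w => Pr mu ([set t | X t = x /\ Y t = y] `&` [set t | A t = w]))); last first.
  by move=> w _; apply: Pr_ext => // t /=; tauto.
by rewrite -Pr_part // hXY -EFinM mulVf // gt_eqF.
Qed.

Lemma esum_part_phi (W W' : choiceType) (A : T -> W) (B : T -> W') w x y :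
  \esum_(b in [set: W']) ((p x y)^-1)%:E *
      Pr mu ([set t | A t = w /\ X t = x /\ Y t = y] `&` [set t | B t = b])
  = (phi A w x y)%:E.
Proof.
rewrite esumZl; [| by rewrite invr_ge0; apply: ltW | by move=> ?; exact: Pr_ge0].
by rewrite -Pr_part // phiE.
Qed.

Lemma part_le_phi (W W' : Type) (A : T -> W) (B : T -> W') w b x y :
  ((p x y)^-1)%:E * Pr mu ([set t | A t = w /\ X t = x /\ Y t = y] `&` [set t | B t = b])
  <= (phi B b x y)%:E.
Proof.
rewrite phiE; apply: lee_wpmul2l; first by rewrite lee_fin invr_ge0 ltW.
by apply: Pr_le => // t /= [[_ [-> ->]] ->].
Qed.

Lemma pos_part (W W' : Type) (A : T -> W) (B : T -> W') w b x y :
  0 < ((p x y)^-1)%:E * Pr mu ([set t | A t = w /\ X t = x /\ Y t = y] `&` [set t | B t = b]) ->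
  exists t, [/\ 0 < mu t, A t = w, X t = x, Y t = y & B t = b].
Proof.
move=> H.
have H' : 0 < Pr mu ([set t | A t = w /\ X t = x /\ Y t = y] `&` [set t | B t = b]).
  rewrite lt_neqAle Pr_ge0 // andbT; apply/negP => /eqP e; move: H.
  by rewrite -e mule0 ltxx.
have [t [[[h1 [h2 h3]] h4] h5]] := Pr_pos mu0 H'.
by exists t.
Qed.

Lemma bound_phi (W W' : choiceType) (A : T -> W) (B : T -> W') (xs ys : V -> V)
  (w : W) (c : R) (cB : W' -> R) :
  (forall i, phi A w (xs i) (ys i) = c) ->
  (forall i b, phi B b (xs i) (ys i) = cB b) ->
  (forall i j b t t', 0 < mu t -> 0 < mu t' -> A t = w -> A t' = w -> B t = b -> B t' = b ->
     X t = xs i -> Y t = ys i -> X t' = xs j -> Y t' = ys j -> i = j) ->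
  (#|V|%:R * c <= 1)%R.
Proof.
move=> hc hcB huniq.
pose u i b := ((p (xs i) (ys i))^-1)%:E *
      Pr mu ([set t | A t = w /\ X t = xs i /\ Y t = ys i] `&` [set t | B t = b]).
apply: (@bound_gen _ _ _ u (fun b => (cB b)%:E)).
- by move=> i; rewrite esum_part_phi hc.
- move=> i b; apply: mule_ge0; [by rewrite lee_fin invr_ge0; apply: ltW | exact: Pr_ge0].
- by move=> i b; rewrite -(hcB i); exact: part_le_phi.
- by move=> b; rewrite -(hcB (one_f gT n)) lee_fin phi_ge0.
- move=> i j b ui uj.
  have [t [mt At Xt Yt Bt]] := pos_part ui.
  have [t' [mt' At' Xt' Yt' Bt']] := pos_part uj.
  exact: (huniq i j b t t').
- by rewrite -(esum_phi B (xs (one_f gT n)) (ys (one_f gT n))); apply: eq_esum => b _; rewrite hcB.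
Qed.


Lemma card_V_gt0 : (0 < #|V|)%N.
Proof. by apply/card_gt0P; exists (one_f gT n). Qed.

Lemma phi_bound_Pr (W : Type) (A : T -> W) w :
  (forall x y, phi A w x y <= #|V|%:R^-1)%R ->
  (forall x y, Pr mu [set t | A t = w /\ X t = x /\ Y t = y] <= (#|V|%:R^-1 * p x y)%:E) /\
  Pr mu [set t | A t = w] <= (#|V|%:R^-1)%:E.
Proof.
move=> hb.
have h1 x y : Pr mu [set t | A t = w /\ X t = x /\ Y t = y] <= (#|V|%:R^-1 * p x y)%:E.
  by rewrite Pr_phi lee_fin ler_wpM2r // ltW.
split => //.
rewrite (Pr_fpart mu0 (fun t => (X t, Y t))).
apply: (@le_trans _ _ (\sum_(u : V * V) (#|V|%:R^-1 * p u.1 u.2)%:E)).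
  apply: lee_sum => -[x y] _; apply: (le_trans _ (h1 x y)); rewrite le_eqVlt; apply/orP; left; apply/eqP.
  by apply: Pr_ext => // t /=; split; [case=> -> [-> ->] | case=> -> [-> ->]].
by rewrite sumEFin -mulr_sumr -pair_bigA /= psum mulr1.
Qed.

Hypothesis hCD : forall t t', 0 < mu t -> 0 < mu t' -> M2 t = M2 t' -> M3 t = M3 t' -> Z t = Z t'.
Hypothesis hTD : forall t t', 0 < mu t -> 0 < mu t' -> M1 t = M1 t' -> M2 t = M2 t' -> M3 t = M3 t' ->
   X t = X t' /\ Y t = Y t'.
Hypothesis hA : Defs.markov mu (fun t => (M1 t, M3 t)) X (fun t => (Y t, Z t)).
Hypothesis hB : Defs.markov mu (fun t => (M1 t, M2 t)) Y (fun t => (X t, Z t)).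
Hypothesis hC : Defs.markov mu (fun t => (M2 t, M3 t)) Z (fun t => (X t, Y t)).

Let mA3 : Defs.markov mu M3 X Y :=
  markov_coarsenC mu0 mu1 fst (markov_coarsenA mu0 mu1 snd hA).
Let mA1 : Defs.markov mu M1 X Y :=
  markov_coarsenC mu0 mu1 fst (markov_coarsenA mu0 mu1 fst hA).
Let mB2 : Defs.markov mu M2 Y X :=
  markov_coarsenC mu0 mu1 fst (markov_coarsenA mu0 mu1 snd hB).
Let mB1 : Defs.markov mu M1 Y X :=
  markov_coarsenC mu0 mu1 fst (markov_coarsenA mu0 mu1 fst hB).
Let mC3 : Defs.markov mu M3 Z (fun t => (X t, Y t)) := markov_coarsenA mu0 mu1 snd hC.
Let mC2 : Defs.markov mu M2 Z (fun t => (X t, Y t)) := markov_coarsenA mu0 mu1 fst hC.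

Lemma le_inv (N c : R) : (0 < N)%R -> (N * c <= 1)%R -> (c <= N^-1)%R.
Proof. move=> N0 H; rewrite -[(N^-1)%R]mulr1 ler_pdivlMl //. Qed.

Local Notation one := (one_f gT n).

Lemma phi3_const w x y : phi M3 w x y = phi M3 w one one.
Proof. by rewrite (@phi_x _ M3 w x y (inv_f x) mA3) (@phi_z _ M3 w x (inv_f x) one one mC3 (ga_inv x)). Qed.

Lemma phi2_const w x y : phi M2 w x y = phi M2 w one one.
Proof. by rewrite (@phi_y _ M2 w x (inv_f y) y mB2) (@phi_z _ M2 w (inv_f y) y one one mC2 (ga_invl y)). Qed.

Lemma phi1_const w x y : phi M1 w x y = phi M1 w one one.
Proof. by rewrite (@phi_x _ M1 w x y one mA1) (@phi_y _ M1 w x one one mB1). Qed.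

Lemma phi23_const ba x : phi (fun t => (M2 t, M3 t)) ba x (inv_f x) =
   phi (fun t => (M2 t, M3 t)) ba one one.
Proof. exact: (@phi_z _ (fun t => (M2 t, M3 t)) ba x (inv_f x) one one hC (ga_inv x)). Qed.

Lemma Npos : (0 < #|V|%:R :> R)%R.
Proof. by rewrite ltr0n card_V_gt0. Qed.

Lemma bound3 w x y : (phi M3 w x y <= #|V|%:R^-1)%R.
Proof.
rewrite phi3_const; apply: le_inv; first exact: Npos.
apply: (@bound_phi _ _ M3 M2 id (fun=> one) w _ (fun b => phi M2 b one one)).
- by move=> i; rewrite phi3_const.
- by move=> i b; rewrite phi2_const.
- move=> i j b t t' mt mt' At At' Bt Bt' Xt Yt Xt' Yt'.
  have := hCD mt mt' (etrans Bt (esym Bt')) (etrans At (esym At')).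
  by rewrite (hcorr mt) (hcorr mt') Xt Yt Xt' Yt' => /ga_cancr.
Qed.

Lemma bound2 w x y : (phi M2 w x y <= #|V|%:R^-1)%R.
Proof.
rewrite phi2_const; apply: le_inv; first exact: Npos.
apply: (@bound_phi _ _ M2 M3 (fun=> one) id w _ (fun b => phi M3 b one one)).
- by move=> i; rewrite phi2_const.
- by move=> i b; rewrite phi3_const.
- move=> i j b t t' mt mt' At At' Bt Bt' Xt Yt Xt' Yt'.
  have := hCD mt mt' (etrans At (esym At')) (etrans Bt (esym Bt')).
  by rewrite (hcorr mt) (hcorr mt') Xt Yt Xt' Yt' => /ga_cancl.
Qed.

Lemma bound1 w x y : (phi M1 w x y <= #|V|%:R^-1)%R.
Proof.
rewrite phi1_const; apply: le_inv; first exact: Npos.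
apply: (@bound_phi _ _ M1 (fun t => (M2 t, M3 t)) id (@inv_f gT n) w
         (phi M1 w one one) (fun b => phi (fun t => (M2 t, M3 t)) b one one)).
- by move=> i; rewrite phi1_const.
- by move=> i b; rewrite phi23_const.
- move=> i j b t t' mt mt' At At' Bt Bt' Xt Yt Xt' Yt'.
  have e := etrans Bt (esym Bt'); case: e => e2 e3.
  have [ex _] := hTD mt mt' (etrans At (esym At')) e2 e3.
  by rewrite -Xt -Xt'.
Qed.

Lemma core_result :
  (forall w, Pr mu [set t | M1 t = w] <= (#|V|%:R^-1)%:E) /\
  (forall w, Pr mu [set t | M2 t = w] <= (#|V|%:R^-1)%:E) /\
  (forall w, Pr mu [set t | M3 t = w] <= (#|V|%:R^-1)%:E) /\
  (forall w x y, Pr mu [set t | M3 t = w /\ X t = x /\ Y t = y] <= (#|V|%:R^-1 * p x y)%:E).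
Proof.
split; [|split; [|split]].
- by move=> w; have [_ ->] := phi_bound_Pr (bound1 w).
- by move=> w; have [_ ->] := phi_bound_Pr (bound2 w).
- by move=> w; have [_ ->] := phi_bound_Pr (bound3 w).
- by move=> w x y; have [H _] := phi_bound_Pr (bound3 w); exact: H.
Qed.

End Core.

Lemma log2_key (R : realType) (N r q : R) : (0 < N)%R -> (0 < r)%R -> (r <= N^-1)%R -> (0 <= q)%R ->
  (q * log2 N <= - q * log2 r)%R.
Proof.
move=> N0 r0 rN q0.
have l2 : (0 < ln (2 : R))%R by apply: ln_gt0; rewrite ltr1n.
have H : (ln N <= - ln r)%R.
  rewrite -subr_le0 opprK -lnM ?posrE //; apply: ln_le0.
  by rewrite -(mulfV (negbT (gt_eqF N0))) ler_wpM2l // ltW.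
rewrite mulNr -mulrN; apply: ler_wpM2l => //.
by rewrite /log2 -mulNr ler_wpM2r // invr_ge0 ltW.
Qed.

Section Entropy.
Variables (R : realType) (T : choiceType) (mu : T -> \bar R).
Hypothesis mu0 : forall t, 0 <= mu t.
Hypothesis mu1 : Pr mu setT = 1.

Lemma entropy_lb (TA : choiceType) (A : T -> TA) (N : R) :
  (0 < N)%R -> (0 <= log2 N)%R ->
  (forall a, Pr mu [set t | A t = a] <= (N^-1)%:E) ->
  (log2 N)%:E <= entropy mu A.
Proof.
move=> N0 lN H; rewrite /entropy.
apply: (@le_trans _ _ (\esum_(a in [set: TA]) (log2 N)%:E * Pr mu [set t | A t = a])).
  rewrite esumZl //; last by move=> a; exact: Pr_ge0.
  rewrite (eq_esum (b := fun a => Pr mu (setT `&` [set t | A t = a]))); last first.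
    by move=> a _; apply: Pr_ext => // t; split => // -[].
  by rewrite -Pr_part // mu1 mule1.
apply: le_esum => a _ /=.
set q := fine (Pr mu [set t | A t = a]).
rewrite (PrE mu0 mu1 [set t | A t = a]) -/q -EFinM lee_fin.
have q0 : (0 <= q)%R := fine_Pr_ge0 mu0 mu1 _.
case: ifPn => [/eqP ->|qn0]; first by rewrite mulr0.
rewrite mulrC; apply: log2_key => //.
  by rewrite lt_neqAle eq_sym qn0.
by rewrite -lee_fin /q -PrE.
Qed.

Lemma cond_entropy_lb (TA TB : choiceType) (A : T -> TA) (B : T -> TB) (N : R) :
  (0 < N)%R -> (0 <= log2 N)%R ->
  (forall a b, Pr mu [set t | A t = a /\ B t = b] <= (N^-1)%:E * Pr mu [set t | B t = b]) ->
  (log2 N)%:E <= cond_entropy mu A B.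
Proof.
move=> N0 lN H; rewrite /cond_entropy.
apply: (@le_trans _ _ (\esum_(ab in [set: TA * TB]) (log2 N)%:E *
     Pr mu [set t | A t = ab.1 /\ B t = ab.2])).
  rewrite esumZl //; last by move=> a; exact: Pr_ge0.
  rewrite (eq_esum (b := fun ab => Pr mu (setT `&` [set t | (A t, B t) = ab]))); last first.
    move=> [a b] _; apply: Pr_ext => // t /=; split; first by case=> -> ->.
    by case=> _ [-> ->].
  by rewrite -Pr_part // mu1 mule1.
apply: le_esum => -[a b] _ /=.
set q := fine (Pr mu [set t | A t = a /\ B t = b]).
rewrite (PrE mu0 mu1 [set t | A t = a /\ B t = b]) -/q -EFinM lee_fin.
set qb := fine (Pr mu [set t | B t = b]).
have q0 : (0 <= q)%R := fine_Pr_ge0 mu0 mu1 _.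
case: ifPn => [/eqP ->|qn0]; first by rewrite mulr0.
have qpos : (0 < q)%R by rewrite lt_neqAle eq_sym qn0.
have Hab : (q <= N^-1 * qb)%R.
  by rewrite -lee_fin /q /qb EFinM -!(PrE mu0 mu1).
have qbpos : (0 < qb)%R.
  rewrite lt_neqAle (fine_Pr_ge0 mu0 mu1) andbT; apply/negP => /eqP qb0.
  by move: Hab; rewrite -qb0 mulr0 => /(lt_le_trans qpos); rewrite ltxx.
rewrite mulrC; apply: log2_key => //.
  by rewrite divr_gt0.
by rewrite ler_pdivrMr // mulrC.
Qed.

End Entropy.

Lemma pf_parse (C : set word) (u u' s s' : word) :
  prefix_free C -> C u -> C u' -> u ++ s = u' ++ s' -> u = u' /\ s = s'.
Proof.
move=> pf Cu Cu' e.
have uu : u = u'.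
  have [le|le] := leqP (size u) (size u').
    apply: pf => //; rewrite prefixE; apply/eqP.
    have e1 := congr1 (take (size u)) e.
    move: e1; rewrite take_size_cat // takel_cat // => e1.
  apply/esym; apply: pf => //; rewrite prefixE; apply/eqP.
  have e1 := congr1 (take (size u')) e.
  have le' : (size u' <= size u)%N := ltnW le.
  move: e1; rewrite [in X in _ = X -> _]take_size_cat // (takel_cat _ le') => e1.
  by rewrite e1.
split => //; have := congr1 (drop (size u')) e.
by rewrite uu !drop_size_cat.
Qed.

Section LinkParse.
Variables (C1 C2 : lhist -> set word).
Hypothesis pf1 : forall h, prefix_free (C1 h).
Hypothesis pf2 : forall h, prefix_free (C2 h).

Definition lgood (g s : lhist) := forall k, (k < size s)%N ->
  C1 (g ++ take k s) (nth ([::], [::]) s k).1 /\ C2 (g ++ take k s) (nth ([::], [::]) s k).2.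

Definition ltr (s : lhist) : word := flatten [seq m.1 ++ m.2 | m <- s].

Lemma link_parse s : forall g s', lgood g s -> lgood g s' -> ltr s = ltr s' ->
  (size s <= size s')%N -> s = take (size s) s'.
Proof.
elim: s => [|m s1 IH] g [|m' s1'] //= G G' e le.
have [C1m C2m] := G 0%N isT; have [C1m' C2m'] := G' 0%N isT.
rewrite /= ?take0 !cats0 in C1m C2m C1m' C2m'.
move: e; rewrite /ltr /= -!catA => e.
have [e1 e2] := pf_parse (@pf1 g) C1m C1m' e.
have [e3 e4] := pf_parse (@pf2 g) C2m C2m' e2.
have mm : m = m' by case: m m' e1 e3 {G G' C1m C2m C1m' C2m' e e2 e4} => [? ?] [? ?] /= -> ->.
rewrite -mm; congr cons; apply: (IH (rcons g m)) => //.
- move=> k kl; have := G k.+1 kl; by rewrite /= -cats1 -catA.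
- move=> k kl; have := G' k.+1 kl; by rewrite /= -cats1 -catA mm.
Qed.

End LinkParse.

Lemma tr_ltr (l : round -> word * word) h : tr_of l h = ltr (map l h).
Proof. by rewrite /tr_of /ltr -map_comp. Qed.

Lemma rounds_eq (a b : seq round) :
  map l12 a = map l12 b -> map l23 a = map l23 b -> map l31 a = map l31 b -> a = b.
Proof.
elim: a b => [|r a IH] [|r' b] //= e1 e2 e3.
case: e1 => r1 e1; case: e2 => r2 e2; case: e3 => r3 e3.
rewrite (IH b e1 e2 e3); congr cons.
by case: r r' r1 r2 r3 => [[? ?] ?] [[? ?] ?]; rewrite /l12 /l23 /l31 /= => -> -> ->.
Qed.

Section Proto.
Variables (Xt Yt Zt : finType) (R : realType) (P : protocol Xt Yt Zt R).
Hypothesis hv : valid_protocol P.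

Lemma pfAB h : prefix_free (codeAB P h). Proof. by case: hv. Qed.
Lemma pfBA h : prefix_free (codeBA P h). Proof. by case: hv => _ []. Qed.
Lemma pfBC h : prefix_free (codeBC P h). Proof. by case: hv => _ [_ []]. Qed.
Lemma pfCB h : prefix_free (codeCB P h). Proof. by case: hv => _ [_ [_ []]]. Qed.
Lemma pfCA h : prefix_free (codeCA P h). Proof. by case: hv => _ [_ [_ [_ []]]]. Qed.
Lemma pfAC h : prefix_free (codeAC P h). Proof. by case: hv => _ [_ [_ [_ [_ []]]]]. Qed.

Lemma kA x h12 h31 : (forall m, (0 <= alice P x h12 h31 m)%R) /\
  (forall u v, (0 < alice P x h12 h31 (u, v))%R -> codeAB P h12 u /\ codeAC P h31 v).
Proof. by case: hv => _ [_ [_ [_ [_ [_ [H _]]]]]]; have [? [_ ?]] := H x h12 h31. Qed.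
Lemma kB y h12 h23 : (forall m, (0 <= bob P y h12 h23 m)%R) /\
  (forall u v, (0 < bob P y h12 h23 (u, v))%R -> codeBC P h23 u /\ codeBA P h12 v).
Proof. by case: hv => _ [_ [_ [_ [_ [_ [_ [H _]]]]]]]; have [? [_ ?]] := H y h12 h23. Qed.
Lemma kC h23 h31 : (forall m, (0 <= charlie P h23 h31 m)%R) /\
  (forall u v, (0 < charlie P h23 h31 (u, v))%R -> codeCA P h31 u /\ codeCB P h23 v).
Proof. by case: hv => _ [_ [_ [_ [_ [_ [_ [_ [H _]]]]]]]]; have [? [_ ?]] := H h23 h31. Qed.
Lemma kO m23 m31 : (forall z, (0 <= out P m23 m31 z)%R) /\ (\sum_(z : Zt) out P m23 m31 z = 1)%R.
Proof. by case: hv => _ [_ [_ [_ [_ [_ [_ [_ [_ H]]]]]]]]. Qed.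

Lemma step_ge0 x y h r : (0 <= step P x y h r)%R.
Proof.
rewrite /step; apply: mulr_ge0; [apply: mulr_ge0|].
- exact: (kA _ _ _).1. - exact: (kB _ _ _).1. - exact: (kC _ _).1.
Qed.

Lemma hprob_ge0 x y h : (0 <= hprob P x y h)%R.
Proof. by apply: prodr_ge0 => k _; exact: step_ge0. Qed.

Lemma prod_pos (m : nat) (F : 'I_m -> R) : (forall k, 0 <= F k)%R ->
  (0 < \prod_(k < m) F k)%R <-> (forall k, 0 < F k)%R.
Proof.
move=> F0; split; last by move=> H; apply: prodr_gt0 => k _; exact: H.
move=> H k; rewrite lt_neqAle F0 andbT; apply/negP => /eqP Fk.
by move: H; rewrite (bigD1 k) //= -Fk mul0r ltxx.
Qed.

Lemma mul3_pos (a b c : R) : (0 <= a)%R -> (0 <= b)%R -> (0 <= c)%R ->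
  (0 < a * b * c)%R <-> [/\ 0 < a, 0 < b & 0 < c]%R.
Proof.
move=> a0 b0 c0; split; last by case=> ? ? ?; rewrite !mulr_gt0.
move=> H; have nz : (a * b * c != 0)%R by rewrite gt_eqF.
rewrite !mulf_eq0 !negb_or in nz; case/andP: nz => /andP[na nb] nc.
by split; rewrite lt_neqAle eq_sym ?na ?nb ?nc.
Qed.

Lemma hprob_pos x y h : (0 < hprob P x y h)%R <->
  (forall k, (k < size h)%N -> [/\
    0 < alice P x (map l12 (take k h)) (map l31 (take k h))
          ((l12 (nth eps_round h k)).1, (l31 (nth eps_round h k)).2),
    0 < bob P y (map l12 (take k h)) (map l23 (take k h))
          ((l23 (nth eps_round h k)).1, (l12 (nth eps_round h k)).2) &
    0 < charlie P (map l23 (take k h)) (map l31 (take k h))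
          ((l31 (nth eps_round h k)).1, (l23 (nth eps_round h k)).2)]%R).
Proof.
rewrite /hprob prod_pos; last by move=> k; exact: step_ge0.
split.
- move=> H k kh; have := H (Ordinal kh); rewrite /step mul3_pos //.
  + exact: (kA _ _ _).1. + exact: (kB _ _ _).1. + exact: (kC _ _).1.
- move=> H k; have := H k (ltn_ord k); rewrite /step -mul3_pos //.
  + exact: (kA _ _ _).1. + exact: (kB _ _ _).1. + exact: (kC _ _).1.
Qed.

Lemma cut_paste x y x' y' h : (0 < hprob P x y h)%R -> (0 < hprob P x' y' h)%R ->
  (0 < hprob P x y' h)%R.
Proof.
move=> /hprob_pos H /hprob_pos H'; apply/hprob_pos => k kh.
by have [? _ ?] := H k kh; have [_ ? _] := H' k kh.
Qed.

Lemma map_nth_l (l : round -> word * word) h k : (k < size h)%N ->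
  nth ([::], [::]) (map l h) k = l (nth eps_round h k).
Proof. by move=> kh; rewrite (nth_map eps_round). Qed.

Lemma good_links x y h : (0 < hprob P x y h)%R ->
  [/\ lgood (codeAB P) (codeBA P) [::] (map l12 h),
      lgood (codeBC P) (codeCB P) [::] (map l23 h) &
      lgood (codeCA P) (codeAC P) [::] (map l31 h)].
Proof.
move=> /hprob_pos H; split => k; rewrite size_map => kh;
  rewrite /= -map_take map_nth_l //; have [ha hb hc] := H k kh.
- have [? _] := (kA _ _ _).2 _ _ ha; have [_ ?] := (kB _ _ _).2 _ _ hb; by split.
- have [? _] := (kB _ _ _).2 _ _ hb; have [_ ?] := (kC _ _).2 _ _ hc; by split.
- have [? _] := (kC _ _).2 _ _ hc; have [_ ?] := (kA _ _ _).2 _ _ ha; by split.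
Qed.

Lemma parse_le x y x' y' h h' : (0 < hprob P x y h)%R -> (0 < hprob P x' y' h')%R ->
  tr_of l12 h = tr_of l12 h' -> tr_of l23 h = tr_of l23 h' -> tr_of l31 h = tr_of l31 h' ->
  (size h <= size h')%N -> h = take (size h) h'.
Proof.
move=> /good_links [g12 g23 g31] /good_links [g12' g23' g31']; rewrite !tr_ltr => e12 e23 e31 le.
have E12 : map l12 h = take (size h) (map l12 h').
  rewrite -(size_map l12 h); apply: (link_parse pfAB pfBA g12 g12' e12).
  by rewrite !size_map.
have E23 : map l23 h = take (size h) (map l23 h').
  rewrite -(size_map l23 h); apply: (link_parse pfBC pfCB g23 g23' e23).
  by rewrite !size_map.
have E31 : map l31 h = take (size h) (map l31 h').
  rewrite -(size_map l31 h); apply: (link_parse pfCA pfAC g31 g31' e31).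
  by rewrite !size_map.
by apply: rounds_eq; rewrite map_take.
Qed.

Lemma parse x y x' y' h h' : (0 < hprob P x y h)%R -> (0 < hprob P x' y' h')%R ->
  complete_run P h -> complete_run P h' ->
  tr_of l12 h = tr_of l12 h' -> tr_of l23 h = tr_of l23 h' -> tr_of l31 h = tr_of l31 h' ->
  h = h'.
Proof.
move=> H H' [q nq] [q' nq'] e12 e23 e31.
have [le|le] := leqP (size h) (size h').
  have eh := parse_le H H' e12 e23 e31 le.
  move: le; rewrite leq_eqVlt => /orP[/eqP es|lt].
    by rewrite eh es take_size.
  by exfalso; apply: (nq' _ lt); rewrite -eh.
have eh := parse_le H' H (esym e12) (esym e23) (esym e31) (ltnW le).
by exfalso; apply: (nq _ le); rewrite -eh.
Qed.

End Proto.

Section Proto2.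
Variables (Xt Yt Zt : finType) (R : realType) (P : protocol Xt Yt Zt R).
Hypothesis hv : valid_protocol P.
Variable f : Xt -> Yt -> Zt.
Hypothesis hcor : correct f P.

Definition runs_of c b a := [set h | complete_run P h /\ tr_of l12 h = c /\
                       tr_of l23 h = b /\ tr_of l31 h = a].

Lemma cond_lawE x y c b a z : cond_law P x y c b a z =
  Pr (fun h => (hprob P x y h * out P b a z)%:E) (runs_of c b a).
Proof. by []. Qed.

Lemma term_ge0 x y b a z h : 0 <= (hprob P x y h * out P b a z)%:E.
Proof. by rewrite lee_fin mulr_ge0 // ?hprob_ge0 // (kO hv _ _).1. Qed.

Lemma cond_law_ge0 x y c b a z : 0 <= cond_law P x y c b a z.
Proof. by rewrite cond_lawE; apply: Pr_ge0 => h; exact: term_ge0. Qed.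

Lemma cond_law_pos x y c b a z : 0 < cond_law P x y c b a z ->
  exists h, [/\ runs_of c b a h, (0 < hprob P x y h)%R & (0 < out P b a z)%R].
Proof.
rewrite cond_lawE => /(Pr_pos (@term_ge0 x y b a z)) [h [Sh]].
rewrite lte_fin => pos; exists h; split => //.
- rewrite lt_neqAle hprob_ge0 // andbT; apply/negP => /eqP e.
  by move: pos; rewrite -e mul0r ltxx.
- rewrite lt_neqAle (kO hv _ _).1 andbT; apply/negP => /eqP e.
  by move: pos; rewrite -e mulr0 ltxx.
Qed.

Lemma cond_law_ge_term x y c b a z h : runs_of c b a h ->
  (hprob P x y h * out P b a z)%:E <= cond_law P x y c b a z.
Proof.
move=> Sh; rewrite cond_lawE.
rewrite -(@esum_set1 _ _ h (fun h => (hprob P x y h * out P b a z)%:E)); last exact: term_ge0.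
by apply: (Pr_le (@term_ge0 x y b a z)) => h' /= ->.
Qed.

Lemma term_pos_cond x y c b a z h : runs_of c b a h -> (0 < hprob P x y h)%R ->
  (0 < out P b a z)%R -> 0 < cond_law P x y c b a z.
Proof.
move=> Sh hp op; apply: (lt_le_trans _ (cond_law_ge_term x y z Sh)).
by rewrite lte_fin mulr_gt0.
Qed.

Lemma charlie_det x y c b a z x' y' c' z' :
  0 < cond_law P x y c b a z -> 0 < cond_law P x' y' c' b a z' ->
  f x y = f x' y' /\ z = z'.
Proof.
move=> /cond_law_pos [h [Sh hp op]] /cond_law_pos [h' [Sh' hp' op']].
have e1 := hcor (term_pos_cond Sh hp op).
have e2 := hcor (term_pos_cond Sh' hp' op').
have e3 := hcor (term_pos_cond Sh hp op').
by rewrite -e1 -e2 e3.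
Qed.

Hypothesis fcl : forall x y y', f x y = f x y' -> y = y'.
Hypothesis fcr : forall x x' y, f x y = f x' y -> x = x'.

Lemma trans_det x y c b a z x' y' z' :
  0 < cond_law P x y c b a z -> 0 < cond_law P x' y' c b a z' -> x = x' /\ y = y'.
Proof.
move=> /cond_law_pos [h [Sh hp op]] /cond_law_pos [h' [Sh' hp' op']].
case: (Sh) => ch [e12 [e23 e31]]; case: (Sh') => ch' [e12' [e23' e31']].
have hh : h = h'.
  apply: (parse hv hp hp' ch ch'); by [rewrite e12 e12' | rewrite e23 e23' | rewrite e31 e31'].
rewrite -hh in hp'.
have hxy' := cut_paste hv hp hp'.
have hx'y := cut_paste hv hp' hp.
have e1 := hcor (term_pos_cond Sh hp op).
have e2 := hcor (term_pos_cond Sh hxy' op).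
have e3 := hcor (term_pos_cond Sh hx'y op).
split.
- by apply: (fcr (y := y)); rewrite -e1 -e3.
- by apply: (fcl (x := x)); rewrite -e1 -e2.
Qed.

End Proto2.

Section Proto3.
Variables (Xt Yt Zt : finType) (R : realType) (P : protocol Xt Yt Zt R).
Hypothesis hv : valid_protocol P.
Hypothesis ht : terminates P.

Lemma cond_total x y :
  \esum_(k in [set: word * word * word * Zt]) cond_law P x y k.1.1.1 k.1.1.2 k.1.2 k.2 = 1.
Proof.
have g0 : forall k : word * word * word * Zt, 0 <= cond_law P x y k.1.1.1 k.1.1.2 k.1.2 k.2.
  by move=> k; exact: cond_law_ge0.
transitivity (\esum_(t in [set: word * word * word]) \esum_(z in [set: Zt])
                 cond_law P x y t.1.1 t.1.2 t.2 z).
  rewrite esum_esum; last by move=> *; exact: cond_law_ge0.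
  rewrite (_ : [set: word * word * word] `*`` (fun=> [set: Zt]) = [set: word * word * word * Zt]) //.
  by apply/seteqP; split.
transitivity (\esum_(t in [set: word * word * word])
                 Pr (fun h => (hprob P x y h)%:E) (runs_of P t.1.1 t.1.2 t.2)).
  apply: eq_esum => -[[c b] a] _ /=.
  rewrite esum_finT; last by move=> z; exact: cond_law_ge0.
  under eq_bigr do rewrite cond_lawE.
  rewrite /Pr -esum_sum; last by move=> *; exact: term_ge0.
  apply: eq_esum => h _.
  by rewrite sumEFin -mulr_sumr (kO hv _ _).2 mulr1.
have h0 : forall h, 0 <= (hprob P x y h)%:E by move=> h; rewrite lee_fin hprob_ge0.
rewrite -(ht x y).
rewrite [RHS](@Pr_part _ _ _ h0 _ (fun h => (tr_of l12 h, tr_of l23 h, tr_of l31 h))).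
apply: eq_esum => -[[c b] a] _ /=; apply: Pr_ext => // h /=.
by rewrite /runs_of /=; split; [case=> ? [-> [-> ->]] | case=> ? [[-> ->] ->]].
Qed.

End Proto3.

Section Joint.
Variables (Xt Yt Zt : finType) (R : realType) (P : protocol Xt Yt Zt R).
Variables (p : Xt -> Yt -> R) (f : Xt -> Yt -> Zt).
Hypothesis hv : valid_protocol P.
Hypothesis ht : terminates P.
Hypothesis hcor : correct f P.
Hypothesis p0 : forall x y, (0 <= p x y)%R.

Lemma joint_ge0 o : 0 <= joint p P o.
Proof. by apply: mule_ge0; [rewrite lee_fin p0 | exact: cond_law_ge0]. Qed.

Lemma joint_pos o : 0 < joint p P o ->
  0 < cond_law P (oX o) (oY o) (oM12 o) (oM23 o) (oM31 o) (oZ o).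
Proof.
move=> H; rewrite lt_neqAle cond_law_ge0 // andbT; apply/negP => /eqP e.
by move: H; rewrite /joint -e mule0 ltxx.
Qed.

Lemma joint_XY x y : Pr (joint p P) [set o | oX o = x /\ oY o = y] = (p x y)%:E.
Proof.
rewrite /Pr (reindex_esum [set: word * word * word * Zt] _
   (fun k => (x, y, k.1.1.1, k.1.1.2, k.1.2, k.2) : outcome Xt Yt Zt)).
  rewrite /joint /oX /oY /oM12 /oM23 /oM31 /oZ /=.
  rewrite esumZl ?p0 //; last by move=> k; exact: cond_law_ge0.
  by rewrite cond_total // mule1.
split.
- by move=> k _; rewrite /oX /oY.
- by move=> [[[? ?] ?] ?] [[[? ?] ?] ?] _ _ [] -> -> -> ->.
- move=> [[[[[x' y'] c] b] a] z] /= [ex ey]; exists (c, b, a, z) => //.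
  by rewrite /oX /oY /= in ex ey; rewrite ex ey.
Qed.

Lemma joint_corr o : 0 < joint p P o -> oZ o = f (oX o) (oY o).
Proof. by move/joint_pos/hcor. Qed.

Lemma joint_CD o o' : 0 < joint p P o -> 0 < joint p P o' ->
  oM23 o = oM23 o' -> oM31 o = oM31 o' -> oZ o = oZ o'.
Proof.
move=> /joint_pos H /joint_pos H' e2 e3; rewrite e2 e3 in H.
by have [_ ->] := charlie_det hv hcor H H'.
Qed.

Lemma joint_TD (fcl : forall x y y', f x y = f x y' -> y = y')
  (fcr : forall x x' y, f x y = f x' y -> x = x') o o' :
  0 < joint p P o -> 0 < joint p P o' ->
  oM12 o = oM12 o' -> oM23 o = oM23 o' -> oM31 o = oM31 o' -> oX o = oX o' /\ oY o = oY o'.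
Proof.
move=> /joint_pos H /joint_pos H' e1 e2 e3; rewrite e1 e2 e3 in H.
exact: (trans_det hv hcor fcl fcr H H').
Qed.

End Joint.

Local Close Scope ereal_scope.
Local Close Scope classical_set_scope.
Unset Implicit Arguments.
Set Strict Implicit.

Theorem theorem13 (R : realType) (gT : finGroupType) (n : nat)
    (p : {ffun 'I_n -> gT} -> {ffun 'I_n -> gT} -> R) :
  (0 < n)%N ->
  is_pmf p ->
  (forall x y, 0 < p x y) ->
  (forall P : protocol {ffun 'I_n -> gT} {ffun 'I_n -> gT} {ffun 'I_n -> gT} R,
     secure p (@group_add gT n) P ->
     ((n%:R * log2 (#|gT|%:R))%:E <= entropy (joint p P) (@oM12 _ _ _))%E /\
     ((n%:R * log2 (#|gT|%:R))%:E <= entropy (joint p P) (@oM23 _ _ _))%E /\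
     ((n%:R * log2 (#|gT|%:R))%:E <= entropy (joint p P) (@oM31 _ _ _))%E) /\
  ((n%:R * log2 (#|gT|%:R))%:E <= rho p (@group_add gT n))%E.
Proof.
move=> n0 [p0 psum] ppos.
have G0 : (0 < #|gT|%:R :> R)%R by rewrite ltr0n; apply/card_gt0P; exists 1%g.
have hN : (n%:R * log2 (#|gT|%:R) = log2 (#|{ffun 'I_n -> gT}|%:R) :> R)%R.
  rewrite card_ffun card_ord natrX /log2 lnXn // -mulr_natl mulrA.
  by rewrite mulr1 mulr_natl.
have Npos : (0 < #|{ffun 'I_n -> gT}|%:R :> R)%R.
  by rewrite ltr0n; apply/card_gt0P; exists (one_f gT n).
have lN : (0 <= log2 (#|{ffun 'I_n -> gT}|%:R : R))%R.
  rewrite /log2 divr_ge0 //; apply: ln_ge0.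
    by rewrite ler1n; apply/card_gt0P; exists (one_f gT n).
  by rewrite ler1n.
have key : forall P : protocol {ffun 'I_n -> gT} {ffun 'I_n -> gT} {ffun 'I_n -> gT} R,
   secure p (@group_add gT n) P ->
   [/\ (forall t, (0 <= joint p P t)%E), (Pr (joint p P) setT = 1)%E &
   (forall w, Pr (joint p P) [set t | oM12 t = w] <= (#|{ffun 'I_n -> gT}|%:R^-1)%:E)%E /\
   (forall w, Pr (joint p P) [set t | oM23 t = w] <= (#|{ffun 'I_n -> gT}|%:R^-1)%:E)%E /\
   (forall w, Pr (joint p P) [set t | oM31 t = w] <= (#|{ffun 'I_n -> gT}|%:R^-1)%:E)%E /\
   (forall w x y, Pr (joint p P) [set t | oM31 t = w /\ oX t = x /\ oY t = y] <=
       (#|{ffun 'I_n -> gT}|%:R^-1 * p x y)%:E)%E].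
  move=> P [hv [ht [hcor hpriv]]].
  have [hA [hB hC]] := hpriv.
  have mu0 := joint_ge0 hv p0.
  have hXY := joint_XY hv ht p0.
  split => //; first exact: mu1 mu0 hXY psum.
  exact: (core_result mu0 hXY ppos psum (joint_corr (p:=p) hv hcor) (joint_CD (p:=p) hv hcor)
           (joint_TD (p:=p) hv hcor (@ga_cancl gT n) (@ga_cancr gT n)) hA hB hC).
split.
  move=> P sec; have [mu0 mu1' [h1 [h2 [h3 _]]]] := key P sec.
  by rewrite hN; split; [|split]; apply: entropy_lb.
rewrite hN; apply: le_ereal_inf_tmp => _ [P sec <-].
have [mu0 mu1' [_ [_ [_ h4]]]] := key P sec.
apply: cond_entropy_lb => // v b.
have hXY := joint_XY (P := P) _ _ p0.
rewrite (@Pr_ext _ _ _ mu0 [set t | (oX t, oY t) = b] [set t | oX t = b.1 /\ oY t = b.2]);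
  last by move=> t; split; [move=> <- | case: b => ? ? /= [-> ->]].
case: sec => hv [ht _]; rewrite hXY // -EFinM.
apply: (le_trans _ (h4 v.2.2 b.1 b.2)); apply: Pr_le => // t /= [<- <-].
by [].
Qed.
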